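(* Let $\omega_s>0$, $R_s>0$, $R_r>0$, $L_s>0$, $L_r>0$, $L_m>0$ with $L_s>L_m$ and $L_r>L_m$, and let $\sigma=1-\frac{L_m^2}{L_sL_r}$. Let $$A=\begin{bmatrix} -\frac{R_s}{\sigma L_s} & \omega_s & \frac{R_sL_m}{\sigma L_sL_r} & 0 \\ -\omega_s & -\frac{R_s}{\sigma L_s} & 0 & \frac{R_sL_m}{\sigma L_sL_r}\\ \frac{R_rL_m}{\sigma L_sL_r} & 0 & -\frac{R_r}{\sigma L_r} & \omega_s \\ 0 & \frac{R_rL_m}{\sigma L_sL_r} & -\omega_s & -\frac{R_r}{\sigma L_r} \end{bmatrix},\qquad B=\begin{bmatrix}0_{2\times2}\\ I_{2\times 2}\end{bmatrix},$$ and let $K\in\mathbb{R}^{2\times 4}$ be any matrix such that $A-BK$ is asymptotically stable (all eigenvalues have negative real part). Write $(A-BK)^{-1}=[d_{ij}]_{i,j=1}^4$ and define $$q_1=\tfrac{L_m}{\sigma L_sL_r}(d_{13}d_{43}-d_{23}d_{33}),\quad q_2=\tfrac{1}{2}\tfrac{L_m}{\sigma L_sL_r}(d_{13}d_{44}+d_{14}d_{43}-d_{23}d_{34}-d_{24}d_{33}),\quad q_3=\tfrac{L_m}{\sigma L_sL_r}(d_{14}d_{44}-d_{24}d_{34}).$$ Then the matrix $\begin{bmatrix}q_1&q_2\\ q_2&q_3\end{bmatrix}$ is positive definite.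
   Context: This matrix is the Hessian (up to a factor 2) of the quadratic map $u=(u_1,u_2)\mapsto T_e(u)=\frac{L_m}{\sigma L_sL_r}(x_1x_4-x_2x_3)$, where $x=-(A-BK)^{-1}[v_{ds}\;v_{qs}\;u_1\;u_2]^T$ for fixed real constants $v_{ds},v_{qs}$; i.e. $T_e(u)=u^T\begin{bmatrix}q_1&q_2\\ q_2&q_3\end{bmatrix}u+b^Tu+a$ for some constants $b\in\mathbb{R}^2$, $a\in\mathbb{R}$. (This models the electromagnetic torque of a doubly fed induction generator at the steady state of its feedback-linearized electrical dynamics.) *)

(* Defs.v *)
(* Real numbers are modelled as the real elements (x \is Num.real)
   of an arbitrary numClosedFieldType R (e.g. the complex numbers); eigenvalues of
   the real matrix A - B K are then taken in R (its "complex" eigenvalues). *)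
From HB Require Import structures.
From mathcomp Require Import all_boot all_order all_algebra.
Set Implicit Arguments. Unset Strict Implicit. Unset Printing Implicit Defensive.
Import Order.TTheory GRing.Theory Num.Theory.
Local Open Scope ring_scope.

Section DFIG.
Variable R : numClosedFieldType.

Definition sigma (Ls Lr Lm : R) : R := 1 - Lm ^+ 2 / (Ls * Lr).

Definition Amat (ws Rs Rr Ls Lr Lm : R) : 'M[R]_4 :=
  let s := sigma Ls Lr Lm in
  \matrix_(i < 4, j < 4)
    match nat_of_ord i, nat_of_ord j with
    | 0, 0 => - (Rs / (s * Ls))
    | 0, 1 => ws
    | 0, 2 => Rs * Lm / (s * Ls * Lr)
    | 1, 0 => - ws
    | 1, 1 => - (Rs / (s * Ls))
    | 1, 3 => Rs * Lm / (s * Ls * Lr)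
    | 2, 0 => Rr * Lm / (s * Ls * Lr)
    | 2, 2 => - (Rr / (s * Lr))
    | 2, 3 => ws
    | 3, 1 => Rr * Lm / (s * Ls * Lr)
    | 3, 2 => - ws
    | 3, 3 => - (Rr / (s * Lr))
    | _, _ => 0
    end.

Definition Bmat : 'M[R]_(4, 2) := col_mx (0 : 'M[R]_(2, 2)) (1%:M : 'M[R]_2).

Definition asymp_stable (n : nat) (M : 'M[R]_n) : Prop :=
  forall z : R, eigenvalue M z -> 'Re z < 0.

Definition posdef2 (M : 'M[R]_2) : Prop :=
  forall u : 'cV[R]_2, (forall i, u i 0 \is Num.real) -> u != 0 ->
    0 < (u^T *m M *m u) 0 0.

(* d i j = entry (i+1, j+1) of (A - B K)^{-1} in the paper's 1-based notation *)
Definition dentry (ws Rs Rr Ls Lr Lm : R) (K : 'M[R]_(2, 4)) (i j : nat) : R :=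
  invmx (Amat ws Rs Rr Ls Lr Lm - Bmat *m K) (inord i) (inord j).

Definition Qmat (ws Rs Rr Ls Lr Lm : R) (K : 'M[R]_(2, 4)) : 'M[R]_2 :=
  let d := dentry ws Rs Rr Ls Lr Lm K in
  let c := Lm / (sigma Ls Lr Lm * Ls * Lr) in
  let q1 := c * (d 0 2 * d 3 2 - d 1 2 * d 2 2) in
  let q2 := 2^-1 * c * (d 0 2 * d 3 3 + d 0 3 * d 3 2 - d 1 2 * d 2 3 - d 1 3 * d 2 2) in
  let q3 := c * (d 0 3 * d 3 3 - d 1 3 * d 2 3) in
  \matrix_(i < 2, j < 2)
    if (nat_of_ord i == 0%N) && (nat_of_ord j == 0%N) then q1
    else if (nat_of_ord i == 1%N) && (nat_of_ord j == 1%N) then q3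
    else q2.

End DFIG.

(* Main.v *)
Require Import Defs.
From HB Require Import structures.
From mathcomp Require Import all_boot all_order all_algebra.
From Stdlib Require Import Ring.
Import Order.TTheory GRing.Theory Num.Theory.
Local Open Scope ring_scope.
Section Gen.
Variables (T : Type) (z o : T) (add mul sub : T -> T -> T) (opp : T -> T).
Hypothesis rth : ring_theory z o add mul sub opp (@eq T).
Add Ring GRing_gen : rth.
Local Infix "+" := add. Local Infix "*" := mul. Local Notation "- x" := (opp x). Local Infix "-" := sub.

Lemma final_id (a b ws c h u0 u1 k02 k03 k12 k13 k22 k23 k32 k33 : T) :
  let w0 := add (mul k02 u0) (mul k03 u1) in
  let w1 := add (mul k12 u0) (mul k13 u1) in
  let w2 := add (mul k22 u0) (mul k23 u1) in
  let w3 := add (mul k32 u0) (mul k33 u1) in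
  add (mul (opp a) w0) (add (mul ws w1) (mul b w2)) = z ->
  add (mul (opp ws) w0) (add (mul (opp a) w1) (mul b w3)) = z ->
  add h h = o ->
  mul b (add (mul (add (mul u0 (mul c (add (mul k02 k32) (opp (mul k12 k22)))))
                  (mul u1 (mul (mul h c) (add (add (add (mul k02 k33) (mul k03 k32)) (opp (mul k12 k23))) (opp (mul k13 k22)))))) u0)
             (mul (add (mul u0 (mul (mul h c) (add (add (add (mul k02 k33) (mul k03 k32)) (opp (mul k12 k23))) (opp (mul k13 k22)))))
                  (mul u1 (mul c (add (mul k03 k33) (opp (mul k13 k23)))))) u1))
  = mul (mul c ws) (add (mul w0 w0) (mul w1 w1)).
Proof.
intros w0 w1 w2 w3 H1 H2 H3.
pose (SS := (k02*k33 + k03*k32 - k12*k23 - k13*k22)).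
transitivity (b*(c*(w0*w3 - w1*w2)) + b*((h+h-o)*(c*SS*u0*u1))).
{ unfold w0, w1, w2, w3, SS. ring. }
rewrite H3.
transitivity (c*(w0*(b*w3) - w1*(b*w2))).
{ ring. }
assert (E2 : b*w2 = a*w0 - ws*w1).
{ transitivity ((-a*w0 + (ws*w1 + b*w2)) + a*w0 - ws*w1). ring. rewrite H1. ring. }
assert (E3 : b*w3 = ws*w0 + a*w1).
{ transitivity ((-ws*w0 + (-a*w1 + b*w3)) + ws*w0 + a*w1). ring. rewrite H2. ring. }
rewrite E2 E3. ring.
Qed.
End Gen.


Lemma RRth (R : comNzRingType) :
  @ring_theory R 0 1 +%R *%R (fun x y => x - y) -%R eq.
Proof.
split=> //; [exact: add0r|exact: addrC|exact: addrA|exact: mul1r|exact: mulrC|exact: mulrA|exact: mulrDl|exact: subrr].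
Qed.

Lemma det_real (R : numDomainType) n (A : 'M[R]_n) :
  (forall i j, A i j \is Num.real) -> \det A \is Num.real.
Proof.
move=> h; rewrite /determinant; apply: rpred_sum => s _.
rewrite rpredM ?rpredX ?rpredN ?rpred1 //; apply: rpred_prod => i _; exact: h.
Qed.

Lemma invmx_real (R : numFieldType) n (A : 'M[R]_n) :
  (forall i j, A i j \is Num.real) -> forall i j, invmx A i j \is Num.real.
Proof.
move=> h i j; rewrite /invmx; case: (A \in unitmx) => //.
rewrite !mxE rpredM ?rpredV ?det_real //.
rewrite /cofactor rpredM ?rpredX ?rpredN ?rpred1 ?det_real // => k l.
by rewrite !mxE.
Qed.

Theorem lemma1 (R : numClosedFieldType) (ws Rs Rr Ls Lr Lm : R)
  (Hws : ws \is Num.real) (HRs : Rs \is Num.real) (HRr : Rr \is Num.real)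
  (HLsr : Ls \is Num.real) (HLrr : Lr \is Num.real) (HLm : Lm \is Num.real)
  (Hws0 : 0 < ws) (HRs0 : 0 < Rs) (HRr0 : 0 < Rr)
  (HLs0 : 0 < Ls) (HLr0 : 0 < Lr) (HLm0 : 0 < Lm)
  (HLs : Lm < Ls) (HLr : Lm < Lr)
  (K : 'M[R]_(2, 4)) (HKreal : forall i j, K i j \is Num.real)
  (Hstab : asymp_stable (Amat ws Rs Rr Ls Lr Lm - Bmat R *m K)) :
  posdef2 (Qmat ws Rs Rr Ls Lr Lm K).
Proof.
move=> u ureal unz.
set M := Amat ws Rs Rr Ls Lr Lm - Bmat R *m K.
set s := sigma Ls Lr Lm.
have s0 : 0 < s.
  rewrite /s /sigma subr_gt0 ltr_pdivrMr ?mulr_gt0 // mul1r expr2.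
  by rewrite ltr_pM // ltW.
have Munit : M \in unitmx.
  rewrite unitmxE unitfE; apply/negP => /det0P [v vnz vM].
  have : eigenvalue M 0 by apply/eigenvalueP; exists v; rewrite ?scale0r.
  move/Hstab; have -> : 'Re (0:R) = 0 by apply/Creal_ReP; exact: rpred0.
  by rewrite ltxx.
have HB : forall j, (Bmat R *m K) ord0 j = 0 /\ (Bmat R *m K) (lift ord0 ord0) j = 0.
  move=> j; split; rewrite mxE big1 // => k _; rewrite /Bmat mxE;
    case: splitP => [i _|i /= Hi]; by rewrite ?mxE ?mul0r.
have Mreal : forall i j, M i j \is Num.real.
  have sreal : sigma Ls Lr Lm \is Num.real by exact: (gtr0_real s0).
  move=> i j; rewrite /M mxE; rewrite rpredD //; last first.
    rewrite mxE rpredN mxE rpred_sum // => k _; rewrite rpredM // /Bmat mxE.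
    by case: splitP => ? _; rewrite mxE ?rpred0 ?rpred_nat.
    rewrite mxE; move: (nat_of_ord i) (nat_of_ord j) => [|[|[|[|?]]]] [|[|[|[|?]]]];
    by rewrite /= ?(rpredM, rpredN, rpredV, rpredB, rpred1, rpredX, rpred0) // ?gtr0_real.
set D := invmx M.
have Dreal : forall i j, D i j \is Num.real by exact: invmx_real.
set e : 'cV[R]_4 := \matrix_(i < 4, j < 1)
  match nat_of_ord i with 2 => u ord0 0 | 3 => u (lift ord0 ord0) 0 | _ => 0 end.
set w := D *m e.
have Mw : M *m w = e by rewrite /w mulmxA mulmxV // mul1mx.
have o0 : ord0 = inord 0 :> 'I_4 by apply/val_inj; rewrite /= inordK.
have o1 : lift ord0 ord0 = inord 1 :> 'I_4 by apply/val_inj; rewrite /= inordK.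
have o2 : lift ord0 (lift ord0 ord0) = inord 2 :> 'I_4 by apply/val_inj; rewrite /= inordK.
have o3 : lift ord0 (lift ord0 (lift ord0 ord0)) = inord 3 :> 'I_4 by apply/val_inj; rewrite /= inordK.
have wE : forall i, w i 0 = D i (inord 2) * u ord0 0 + D i (inord 3) * u (lift ord0 ord0) 0.
  move=> i; rewrite /w mxE !big_ord_recl big_ord0 !mxE /= ?mul0r ?mulr0 ?add0r ?addr0.
  by rewrite o2 o3.
have MBE : forall i j, M i j = Amat ws Rs Rr Ls Lr Lm i j - (Bmat R *m K) i j.
  by move=> i j; rewrite /M !mxE.
have eq0 := Mw; move/matrixP/(_ ord0 0): eq0.
rewrite [RHS]mxE /= mxE !big_ord_recl big_ord0 !MBE !(proj1 (HB _)) !subr0 !wE !mxE /= ?mul0r ?add0r ?addr0.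
rewrite ?o3 ?o2 ?o1 ?o0 => H1.
have eq1 := Mw; move/matrixP/(_ (lift ord0 ord0) 0): eq1.
rewrite [RHS]mxE /= mxE !big_ord_recl big_ord0 !MBE !(proj2 (HB _)) !subr0 !wE !mxE /= ?mul0r ?add0r ?addr0.
rewrite ?o3 ?o2 ?o1 ?o0 => H2.
have H3 : 2^-1 + 2^-1 = 1 :> R.
  by rewrite -mulr2n -(mulr_natl (2^-1)) divff // pnatr_eq0.
have key := @final_id _ _ _ _ _ _ _ (RRth R) _ _ _ (Lm / (sigma Ls Lr Lm * Ls * Lr)) _ _ _ _ _ _ _ _ _ _ _ H1 H2 H3.
rewrite ?mxE !big_ord_recl !big_ord0 ?mxE /=.
rewrite ?big_ord_recl ?big_ord0 ?mxE /= /dentry -/M -/D ?addr0.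
have b0 : 0 < Rs * Lm / (sigma Ls Lr Lm * Ls * Lr) by rewrite divr_gt0 ?mulr_gt0.
rewrite -(pmulr_rgt0 _ b0) key.
rewrite mulr_gt0 ?divr_gt0 ?mulr_gt0 ?invr_gt0 ?mulr_gt0 //.
rewrite -!wE.
have wreal : forall i, w i 0 \is Num.real.
  by move=> i; rewrite wE rpredD ?rpredM.
have sqge0 : forall x : R, x \is Num.real -> 0 <= x * x.
  by move=> x xr; rewrite -expr2 real_exprn_even_ge0.
have sqgt0 : forall x : R, x \is Num.real -> x != 0 -> 0 < x * x.
  by move=> x xr xn0; rewrite -expr2 real_exprn_even_gt0 // xn0 orbT.
case: (eqVneq (w (inord 0) 0) 0) => h0; last first.
  by apply: ltr_wpDr; [apply: sqge0 | apply: sqgt0].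
case: (eqVneq (w (inord 1) 0) 0) => h1; last first.
  by rewrite h0 mul0r add0r sqgt0.
exfalso; move: unz; apply/negP; rewrite negbK.
rewrite -!wE h0 h1 !mulr0 ?add0r ?addr0 in H1 H2.
have bn0 : Rs * Lm / (sigma Ls Lr Lm * Ls * Lr) != 0 by rewrite gt_eqF.
have h2 : w (inord 2) 0 = 0 by apply/eqP; move: H1 => /eqP; rewrite mulf_eq0 (negPf bn0).
have h3 : w (inord 3) 0 = 0 by apply/eqP; move: H2 => /eqP; rewrite mulf_eq0 (negPf bn0).
have ue : forall i, e i 0 = 0.
  move=> i; rewrite -Mw mxE !big_ord_recl big_ord0.
  by rewrite ?o3 ?o2 ?o1 ?o0 h0 h1 h2 h3 !mulr0 !addr0.
apply/eqP/matrixP => i j; rewrite ord1 !mxE.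
case: i => [[|[|k]] Hk] //.
  have := ue (inord 2); rewrite mxE inordK //= => <-.
  by congr (u _ 0); apply/val_inj.
have := ue (inord 3); rewrite mxE inordK //= => <-.
by congr (u _ 0); apply/val_inj.
Qed.
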